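(* Let $\kappa\in[0,1)$. There exists a unique solution $x\in(0,K(\kappa))$ of the equation $$\kappa'\,\mathrm{sc}_\kappa(x)-\mathrm{dc}_\kappa(x)+2\kappa'\,\mathrm{nc}_\kappa(x)=0$$ if and only if $\kappa\in\left(\tfrac{\sqrt3}{2},1\right)$ (and for $\kappa\notin(\tfrac{\sqrt3}{2},1)$ there is no solution in $(0,K(\kappa))$).
   Context: $\kappa'=\sqrt{1-\kappa^2}$; $\mathrm{sn}_\kappa,\mathrm{cn}_\kappa,\mathrm{dn}_\kappa$ are the Jacobi elliptic functions with modulus $\kappa$, with $\mathrm{sc}=\mathrm{sn}/\mathrm{cn}$, $\mathrm{nc}=1/\mathrm{cn}$, $\mathrm{dc}=\mathrm{dn}/\mathrm{cn}$. $K(\kappa)=\int_0^{\pi/2}(1-\kappa^2\sin^2\theta)^{-1/2}d\theta$ is the complete elliptic integral of the first kind. *)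

(* Defs.v *)
From Stdlib Require Import Reals Lra ClassicalEpsilon.
From Coquelicot Require Import Coquelicot.
Open Scope R_scope.

Definition ellF (k phi : R) : R :=
  RInt (fun t => / sqrt (1 - k ^ 2 * sin t ^ 2)) 0 phi.

Definition ellK (k : R) : R := ellF k (PI / 2).

Definition kprime (k : R) : R := sqrt (1 - k ^ 2).

(* Jacobi amplitude: the (unique, for 0 <= k < 1) phi with F(phi|k) = x *)
Definition am (k x : R) : R :=
  epsilon (inhabits 0) (fun phi => ellF k phi = x).

Definition sn (k x : R) : R := sin (am k x).
Definition cn (k x : R) : R := cos (am k x).
Definition dn (k x : R) : R := sqrt (1 - k ^ 2 * sn k x ^ 2).

Definition sc (k x : R) : R := sn k x / cn k x.
Definition nc (k x : R) : R := / cn k x.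
Definition dc (k x : R) : R := dn k x / cn k x.

(* Main.v *)
Require Import Defs.
From Stdlib Require Import Reals Lra ClassicalEpsilon.
From Coquelicot Require Import Coquelicot.
Open Scope R_scope.

Section S.
Variable k : R.
Hypothesis hk : 0 <= k < 1.
Let f := fun t => / sqrt (1 - k ^ 2 * sin t ^ 2).

Lemma D_pos t : 0 < 1 - k ^ 2 * sin t ^ 2.
Proof.
  destruct (SIN_bound t).
  replace (k ^ 2 * sin t ^ 2) with ((k*k) * (sin t * sin t)) by ring.
  assert (sin t * sin t <= 1) by nra. assert (0 <= sin t * sin t) by nra.
  assert (k * k < 1) by nra. nra.
Qed.

Lemma f_pos t : 0 < f t.
Proof. unfold f. apply Rinv_0_lt_compat, sqrt_lt_R0, D_pos. Qed.

Lemma f_cont t : continuous f t.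
Proof.
  apply (ex_derive_continuous (V:=R_NormedModule)). unfold f. pose proof (D_pos t).
  auto_derive. split; [lra|]. split; [|auto]. apply Rgt_not_eq, sqrt_lt_R0. lra.
Qed.

Lemma f_exint a b : ex_RInt f a b.
Proof. apply (ex_RInt_continuous (V:=R_CompleteNormedModule)). intros; apply f_cont. Qed.

Lemma ellF_lt a b : a < b -> ellF k a < ellF k b.
Proof.
  intro h. unfold ellF. fold f.
  rewrite <- (RInt_Chasles f 0 a b) by apply f_exint.
  assert (0 < RInt f a b). { apply RInt_gt_0; auto. intros; apply f_pos. intros; apply f_cont. }
  unfold plus; simpl. lra.
Qed.

Lemma ellF_inj a b : ellF k a = ellF k b -> a = b.
Proof.
  intro h. destruct (Rtotal_order a b) as [H|[H|H]]; auto.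
  apply ellF_lt in H; lra. apply ellF_lt in H; lra.
Qed.

Lemma ellF_0 : ellF k 0 = 0.
Proof. unfold ellF. rewrite RInt_point. reflexivity. Qed.

Lemma ellF_cont : continuity (ellF k).
Proof.
  intro x. apply continuity_pt_filterlim. apply (ex_derive_continuous (V:=R_NormedModule)).
  exists (f x). unfold ellF. fold f. apply (is_derive_RInt f (fun b => RInt f 0 b) 0 x).
  - apply filter_forall. intro y. exact (RInt_correct _ _ _ (f_exint _ _)).
  - apply f_cont.
Qed.

Lemma am_spec x : 0 < x < ellK k -> 0 < am k x < PI / 2 /\ ellF k (am k x) = x.
Proof.
  intro hx. unfold ellK in hx.
  assert (HP : 0 < PI / 2) by (pose proof PI_RGT_0; lra).
  destruct (IVT_gen (ellF k) 0 (PI/2) x ellF_cont) as [p [Hp Hpe]].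
  { rewrite ellF_0, Rmin_left, Rmax_right; lra. }
  rewrite Rmin_left, Rmax_right in Hp by lra.
  assert (E : ellF k (am k x) = x).
  { unfold am. apply epsilon_spec. exists p. exact Hpe. }
  assert (am k x = p) by (apply ellF_inj; congruence). subst p.
  split; [|exact E]. split.
  - destruct (Rle_lt_dec (am k x) 0) as [h|h]; auto.
    destruct h as [h|h]. apply ellF_lt in h. rewrite ellF_0 in h. lra.
    rewrite h, ellF_0 in E. lra.
  - destruct (Rle_lt_dec (PI/2) (am k x)) as [h|h]; auto.
    destruct h as [h|h]. lra. rewrite <- h in E. lra.
Qed.

Lemma am_ellF p : 0 < p < PI / 2 -> am k (ellF k p) = p /\ 0 < ellF k p < ellK k.
Proof.
  intro hp. assert (H1 : 0 < ellF k p < ellK k).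
  { unfold ellK. split; [rewrite <- ellF_0|]; apply ellF_lt; lra. }
  split; auto. apply ellF_inj. apply am_spec; auto.
Qed.
End S.

Lemma alg_iff (k s c : R) : 0 <= k < 1 -> 0 < s < 1 -> 0 < c ->
  (kprime k * (s / c) - sqrt (1 - k ^ 2 * s ^ 2) / c + 2 * kprime k * / c = 0
   <-> s = 4 * k ^ 2 - 3).
Proof.
  intros hk hs hc. unfold kprime.
  assert (Hkp : sqrt (1 - k^2) * sqrt (1 - k^2) = 1 - k^2) by (apply sqrt_sqrt; nra).
  pose proof (sqrt_pos (1 - k^2)) as Hkp0.
  assert (HD : 0 <= 1 - k ^ 2 * s ^ 2) by (simpl; nra).
  assert (Eq : kprime k * (s / c) - sqrt (1 - k ^ 2 * s ^ 2) / c + 2 * kprime k * / c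
     = (sqrt (1 - k^2) * s + 2 * sqrt (1 - k^2) - sqrt (1 - k ^ 2 * s ^ 2)) / c)
    by (unfold kprime; field; lra).
  unfold kprime in Eq. rewrite Eq. split.
  - intro h. assert (h2 : sqrt (1 - k^2) * s + 2 * sqrt (1 - k^2) = sqrt (1 - k ^ 2 * s ^ 2)).
    { assert (h3 : (sqrt (1 - k^2) * s + 2 * sqrt (1 - k^2) - sqrt (1 - k ^ 2 * s ^ 2)) = 0).
      { apply (Rmult_eq_reg_r (/ c)). rewrite Rmult_0_l. exact h. apply Rgt_not_eq, Rinv_0_lt_compat; lra. }
      lra. }
    pose proof (sqrt_sqrt _ HD) as HD2.
    assert (h4 : (sqrt (1 - k^2) * s + 2 * sqrt (1 - k^2)) * (sqrt (1 - k^2) * s + 2 * sqrt (1 - k^2)) = 1 - k^2 * s^2) by (rewrite h2; exact HD2).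
    assert (h5 : (s + 1) * (s - (4 * k^2 - 3)) = 0).
    { replace ((s + 1) * (s - (4 * k^2 - 3))) with
        ((sqrt (1 - k^2) * sqrt (1 - k^2)) * (s+2)*(s+2) - (1 - k^2 * s^2)) by (rewrite Hkp; ring).
      rewrite <- h4. ring. }
    apply Rmult_integral in h5. destruct h5; lra.
  - intro h. assert (h2 : sqrt (1 - k ^ 2 * s ^ 2) = sqrt (1 - k^2) * (s + 2)).
    { replace (1 - k ^ 2 * s ^ 2) with ((sqrt (1 - k^2) * (s + 2)) ^ 2).
      apply sqrt_pow2. nra.
      replace ((sqrt (1 - k^2) * (s + 2)) ^ 2) with ((sqrt (1 - k^2) * sqrt (1 - k^2)) * (s+2)^2) by ring.
      rewrite Hkp. rewrite h. ring. }
    rewrite h2. unfold Rdiv. ring_simplify. reflexivity.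
Qed.

Lemma trig_facts p : 0 < p < PI / 2 -> 0 < sin p < 1 /\ 0 < cos p.
Proof.
  intro h. pose proof PI_RGT_0.
  assert (hs : 0 < sin p) by (apply sin_gt_0; lra).
  assert (hc : 0 < cos p) by (apply cos_gt_0; lra).
  pose proof (sin2_cos2 p). unfold Rsqr in *. split; [split|]; auto; nra.
Qed.

Lemma eq_am k (hk : 0 <= k < 1) x : 0 < x < ellK k ->
  (kprime k * sc k x - dc k x + 2 * kprime k * nc k x = 0 <-> sin (am k x) = 4 * k ^ 2 - 3).
Proof.
  intro hx. destruct (am_spec k hk x hx) as [ha _].
  destruct (trig_facts _ ha) as [hs hc].
  unfold sc, dc, nc, dn, sn, cn. apply alg_iff; auto.
Qed.

Lemma dir1 k (hk : 0 <= k < 1) : (exists x : R, 0 < x < ellK k /\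
      kprime k * sc k x - dc k x + 2 * kprime k * nc k x = 0) -> sqrt 3 / 2 < k < 1.
Proof.
  intros [x [hx hP]]. apply (eq_am k hk x hx) in hP.
  destruct (am_spec k hk x hx) as [ha _].
  destruct (trig_facts _ ha) as [[hs1 hs2] _].
  assert (H3 : sqrt 3 * sqrt 3 = 3) by (apply sqrt_sqrt; lra).
  pose proof (sqrt_pos 3).
  split; [|lra]. destruct (Rlt_or_le (sqrt 3 / 2) k) as [h|h]; auto.
  exfalso. simpl in hP. nra.
Qed.

Theorem mainTheorem13 (k : R) (hk : 0 <= k < 1) :
  ((exists! x : R, 0 < x < ellK k /\
      kprime k * sc k x - dc k x + 2 * kprime k * nc k x = 0)
    <-> sqrt 3 / 2 < k < 1)
  /\
  (~ (sqrt 3 / 2 < k < 1) ->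
     ~ (exists x : R, 0 < x < ellK k /\
      kprime k * sc k x - dc k x + 2 * kprime k * nc k x = 0)).
Proof.
  split; [split|].
  - intros [x [H _]]. apply dir1; eauto.
  - intro hk2.
    assert (H3 : sqrt 3 * sqrt 3 = 3) by (apply sqrt_sqrt; lra).
    pose proof (sqrt_pos 3). pose proof PI_RGT_0.
    set (s0 := 4 * k ^ 2 - 3).
    assert (hs0 : 0 < s0 < 1) by (unfold s0; simpl; nra).
    set (p := asin s0).
    assert (hsp : sin p = s0) by (apply sin_asin; lra).
    assert (hp : 0 < p < PI / 2).
    { pose proof (asin_bound s0). fold p in H1.
      destruct (Rtotal_order p 0) as [h|[h|h]].
      - assert (0 < sin (- p)) by (apply sin_gt_0; lra). rewrite sin_neg in H2. lra.
      - rewrite h, sin_0 in hsp. lra.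
      - split; auto. destruct H1 as [_ [h2|h2]]; auto. rewrite h2, sin_PI2 in hsp. lra. }
    destruct (am_ellF k hk p hp) as [ham hx].
    exists (ellF k p). split.
    + split; auto. apply (eq_am k hk _ hx). rewrite ham. exact hsp.
    + intros y [hy Py]. apply (eq_am k hk _ hy) in Py.
      destruct (am_spec k hk y hy) as [hay hey].
      assert (am k y = p).
      { rewrite <- (asin_sin (am k y)) by lra. rewrite Py. reflexivity. }
      rewrite <- hey, H1. reflexivity.
  - intros hn hex. apply hn. apply dir1; auto.
Qed.
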